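(* The map $G$ is continuous on the metric space $(\mathcal{X},d)$.
   Context: Fix an integer $\mathsf{N}\ge 1$ and write $\llbracket a;b\rrbracket=\{a,a+1,\dots,b\}$. Let $f:\mathbb{Z}/4\mathbb{Z}\to\mathbb{Z}/4\mathbb{Z}$, $f(x)=x+1 \pmod 4$, with $f^{-1}(x)=x-1\pmod 4$ and $f^0=\mathrm{id}$. Let $\mathrm{sign}(x)=1$ if $x>0$, $0$ if $x=0$, $-1$ if $x<0$. For $k\in\llbracket -\mathsf{N};\mathsf{N}\rrbracket$ define $f_k:(\mathbb{Z}/4\mathbb{Z})^{\mathsf{N}}\to(\mathbb{Z}/4\mathbb{Z})^{\mathsf{N}}$ by $f_k(C_1,\dots,C_{\mathsf{N}})=(C_1,\dots,C_{|k|-1},f^{\mathrm{sign}(k)}(C_{|k|}),\dots,f^{\mathrm{sign}(k)}(C_{\mathsf{N}}))$ (so $f_0$ is the identity). Folding sequences are $F=(F^j)_{j\in\mathbb{N}}\in\llbracket -\mathsf{N};\mathsf{N}\rrbracket^{\mathbb{N}}$; let $i(F)=F^0$ and let $\sigma$ be the shift, $\sigma((F^j)_{j})=(F^{j+1})_{j}$. A finite sequence $(k_1,\dots,k_n)$ is identified with $(k_1,\dots,k_n,0,0,\dots)$. On $\check{\mathcal{X}}=(\mathbb{Z}/4\mathbb{Z})^{\mathsf{N}}\times\llbracket -\mathsf{N};\mathsf{N}\rrbracket^{\mathbb{N}}$ define $G((C,F))=(f_{i(F)}(C),\sigma(F))$. SAW requirement: for $C\in(\mathbb{Z}/4\mathbb{Z})^{\mathsf{N}}$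 let $p(C)=(X_0,\dots,X_{\mathsf{N}})\in(\mathbb{Z}^2)^{\mathsf{N}+1}$ with $X_0=(0,0)$ and $X_i=X_{i-1}+v(C_i)$, where $v(0)=(1,0)$, $v(1)=(0,-1)$, $v(2)=(-1,0)$, $v(3)=(0,1)$. $C$ satisfies the SAW requirement iff the points $X_0,\dots,X_{\mathsf{N}}$ are pairwise distinct. Let $\mathfrak{C}_{\mathsf{N}}$ be the set of $C\in(\mathbb{Z}/4\mathbb{Z})^{\mathsf{N}}$ for which there exist $n\ge1$ and $k_1,\dots,k_n\in\llbracket -\mathsf{N};\mathsf{N}\rrbracket$ such that $C$ is the first component of $G^n(((0,\dots,0),(k_1,\dots,k_n)))$ and, for every $i\le n$, the first component of $G^i(((0,\dots,0),(k_1,\dots,k_n)))$ satisfies the SAW requirement. Let $\mathcal{X}=\mathfrak{C}_{\mathsf{N}}\times\llbracket -\mathsf{N};\mathsf{N}\rrbracket^{\mathbb{N}}$ with metric $d((C,F),(\check C,\check F))=d_C(C,\check C)+d_F(F,\check F)$, where $d_C(C,\check C)=\sum_{k=1}^{\mathsf{N}}\delta(C_k,\check C_k)2^{\mathsf{N}-k}$ ($\delta(a,b)=0$ if $a=b$, $1$ otherwise) and $d_F(F,\check F)=\frac{9}{2\mathsf{N}}\sum_{k=0}^{\infty}\frac{|F^k-\check F^k|}{10^{k+1}}$. The paper regards $G$ as a self-map of $\mathcal{X}$. *)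

(* Defs.v *)
From Stdlib Require Import Reals ZArith List.
From Coquelicot Require Import Coquelicot.
Import ListNotations.
Open Scope R_scope.

(* A configuration C in (Z/4Z)^N is a list of N integers in {0,1,2,3};
   C_i (1 <= i <= N) is [nth (i-1) C 0]. *)
Definition Conf := list Z.

(* f^{sign k} applied to coordinates |k|, ..., N (0-based index i >= |k|-1). *)
Definition fk (k : Z) (C : Conf) : Conf :=
  map (fun ic : nat * Z =>
         let (i, c) := ic in
         if Z.leb (Z.abs k) (Z.of_nat i + 1) then Z.modulo (c + Z.sgn k) 4 else c)
      (combine (seq 0 (length C)) C).

Definition vstep (c : Z) : Z * Z :=
  match c with
  | 0%Z => (1, 0)%Z
  | 1%Z => (0, -1)%Z
  | 2%Z => (-1, 0)%Z
  | _ => (0, 1)%Z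
  end.

Fixpoint path_from (X : Z * Z) (C : Conf) : list (Z * Z) :=
  match C with
  | [] => [X]
  | c :: C' => X :: path_from ((fst X + fst (vstep c))%Z, (snd X + snd (vstep c))%Z) C'
  end.

Definition SAW (C : Conf) : Prop := NoDup (path_from (0%Z, 0%Z) C).

Definition zeros (N : nat) : Conf := repeat 0%Z N.

(* first component of G^i((0,...,0),(k_1,...,k_n)) = f_{k_i} o ... o f_{k_1} (0) *)
Definition apply_folds (ks : list Z) (C : Conf) : Conf :=
  fold_left (fun C k => fk k C) ks C.

Definition in_range (N : nat) (k : Z) : Prop := (- Z.of_nat N <= k <= Z.of_nat N)%Z.

Definition frakC (N : nat) (C : Conf) : Prop :=
  exists ks : list Z,
    (1 <= length ks)%nat /\ List.Forall (in_range N) ks /\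
    C = apply_folds ks (zeros N) /\
    (forall i, (i <= length ks)%nat -> SAW (apply_folds (firstn i ks) (zeros N))).

Definition Fold := nat -> Z.
Definition is_fold (N : nat) (F : Fold) : Prop := forall j, in_range N (F j).

Definition Pt := (Conf * Fold)%type.

Definition inX (N : nat) (x : Pt) : Prop := frakC N (fst x) /\ is_fold N (snd x).

Definition G (x : Pt) : Pt := (fk (snd x 0%nat) (fst x), fun j => snd x (S j)).

Definition delta (a b : Z) : R := if Z.eqb a b then 0 else 1.

Definition dC (N : nat) (C C' : Conf) : R :=
  fold_right Rplus 0
    (map (fun k => delta (nth (k - 1) C 0%Z) (nth (k - 1) C' 0%Z) * 2 ^ (N - k))
         (seq 1 N)).

Definition dF (N : nat) (F F' : Fold) : R :=
  9 / (2 * INR N) * Series (fun k => IZR (Z.abs (F k - F' k)) / 10 ^ (S k)).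

Definition d (N : nat) (x y : Pt) : R := dC N (fst x) (fst y) + dF N (snd x) (snd y).

(* Main.v *)
Require Import Defs.
From Stdlib Require Import Reals ZArith List.
From Coquelicot Require Import Coquelicot.
From Stdlib Require Import Lia Lra.
Open Scope R_scope.

Lemma len_fk k C : length (fk k C) = length C.
Proof. unfold fk. rewrite length_map, length_combine, length_seq. lia. Qed.

Lemma len_apply ks C : length (apply_folds ks C) = length C.
Proof.
  revert C; induction ks as [|k ks IH]; intros C; simpl; auto.
  unfold apply_folds in *; simpl. rewrite IH, len_fk. auto.
Qed.

Lemma frakC_len N C : frakC N C -> length C = N.
Proof.
  intros [ks [_ [_ [-> _]]]]. rewrite len_apply. unfold zeros. apply repeat_length.
Qed.

Lemma sum_ge0 (g : nat -> R) l : (forall x, 0 <= g x) -> 0 <= fold_right Rplus 0 (map g l).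
Proof. intros H; induction l; simpl; [lra|]. specialize (H a); lra. Qed.

Lemma sum_ge_mem (g : nat -> R) l x : (forall x, 0 <= g x) -> In x l ->
  g x <= fold_right Rplus 0 (map g l).
Proof.
  intros H; induction l; simpl; [tauto|]. intros [<-|Hi].
  - pose proof (sum_ge0 g l H); lra.
  - specialize (IHl Hi); specialize (H a); lra.
Qed.

Lemma sum_zero (g : nat -> R) l : (forall x, g x = 0) -> fold_right Rplus 0 (map g l) = 0.
Proof. intros H; induction l; simpl; [lra|]. rewrite H, IHl; lra. Qed.

Lemma delta_ge a b : 0 <= delta a b.
Proof. unfold delta; destruct (Z.eqb a b); lra. Qed.

Lemma term_ge0 N C C' k : 0 <= delta (nth (k - 1) C 0%Z) (nth (k - 1) C' 0%Z) * 2 ^ (N - k).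
Proof. apply Rmult_le_pos; [apply delta_ge| apply pow_le; lra]. Qed.

Lemma dC_ge0 N C C' : 0 <= dC N C C'.
Proof. unfold dC. apply sum_ge0. intros; apply term_ge0. Qed.

Lemma dC_refl N C : dC N C C = 0.
Proof.
  unfold dC. apply sum_zero. intros k. unfold delta. rewrite Z.eqb_refl. lra.
Qed.

Lemma dC_small N C C' : length C = N -> length C' = N -> dC N C C' < 1 -> C = C'.
Proof.
  intros H1 H2 Hd. apply nth_ext with (d := 0%Z) (d' := 0%Z); [lia|].
  intros k Hk.
  assert (Hin : In (S k) (seq 1 N)) by (apply in_seq; lia).
  pose proof (sum_ge_mem _ _ _ (term_ge0 N C C') Hin) as Hg.
  fold (dC N C C') in Hg.
  cbv beta in Hg; replace (S k - 1)%nat with k in Hg by lia.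
  unfold delta in Hg.
  destruct (Z.eqb_spec (nth k C 0%Z) (nth k C' 0%Z)) as [E|E]; auto.
  exfalso. assert (1 <= 2 ^ (N - S k)) by (apply pow_R1_Rle; lra). rewrite Rmult_1_l in Hg; lra.
Qed.

Definition aF (F F' : Fold) k := IZR (Z.abs (F k - F' k)) / 10 ^ (S k).

Lemma aF_ge0 F F' k : 0 <= aF F F' k.
Proof.
  unfold aF. apply Rdiv_le_0_compat; [apply IZR_le; lia| apply pow_lt; lra].
Qed.

Lemma aF_ex N F F' : is_fold N F -> is_fold N F' -> ex_series (aF F F').
Proof.
  intros HF HF'.
  apply (@ex_series_le R_AbsRing R_CompleteNormedModule _ (fun n => (1/10)^n * (2 * INR N))).
  - intros n. change (norm (aF F F' n)) with (Rabs (aF F F' n)).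
    rewrite Rabs_pos_eq by apply aF_ge0. unfold aF.
    specialize (HF n); specialize (HF' n); unfold in_range in *.
    assert (Hz : (Z.abs (F n - F' n) <= 2 * Z.of_nat N)%Z) by lia.
    apply IZR_le in Hz. rewrite mult_IZR, <- INR_IZR_INZ in Hz.
    replace ((1/10)^n) with (/ 10 ^ n) by (unfold Rdiv; rewrite Rmult_1_l, pow_inv; auto).
    assert (Hp : 0 < 10 ^ n) by (apply pow_lt; lra).
    simpl. unfold Rdiv. rewrite Rinv_mult.
    assert (0 <= IZR (Z.abs (F n - F' n))) by (apply IZR_le; lia).
    assert (0 < / 10 ^ n) by (apply Rinv_0_lt_compat; lra).
    assert (IZR (Z.abs (F n - F' n)) * / 10 <= 2 * INR N) by lra.
    nra.
  - apply ex_series_scal_r, ex_series_geom. rewrite Rabs_pos_eq; lra.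
Qed.

Lemma series_ge0 a : ex_series a -> (forall k, 0 <= a k) -> 0 <= Series a.
Proof.
  intros He H. replace 0 with (Series (fun n => 0 * a n)) by (rewrite Series_scal_l; ring).
  apply Series_le; auto. intros n; rewrite Rmult_0_l; split; [lra| auto].
Qed.

Lemma dF_shift N F F' : is_fold N F -> is_fold N F' -> F 0%nat = F' 0%nat ->
  dF N (fun j => F (S j)) (fun j => F' (S j)) = 10 * dF N F F'.
Proof.
  intros HF HF' E. unfold dF. fold (aF F F').
  rewrite (Series_incr_1 _ (aF_ex N F F' HF HF')).
  unfold aF at 1. rewrite E, Z.sub_diag. simpl (Z.abs 0). 
  assert (Hs : Series (fun k : nat => IZR (Z.abs (F (S k) - F' (S k))) / 10 ^ S k)
     = 10 * Series (fun k => aF F F' (S k))).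
  { rewrite <- (Series_scal_l 10). apply Series_ext.
    intros n. unfold aF. simpl. field; repeat split; try apply pow_nonzero; lra. }
  rewrite Hs. unfold Rdiv at 3. rewrite Rmult_0_l, Rplus_0_l. ring.
Qed.

Lemma dF_ge0 N F F' : is_fold N F -> is_fold N F' -> 0 <= dF N F F'.
Proof.
  intros HF HF'. unfold dF. fold (aF F F').
  assert (0 < INR N \/ INR N = 0) as [H|H] by (pose proof (pos_INR N); lra).
  - apply Rmult_le_pos. apply Rdiv_le_0_compat; lra.
    apply series_ge0; [apply (aF_ex N); auto| apply aF_ge0].
  - rewrite H, Rmult_0_r. unfold Rdiv. rewrite Rinv_0. lra.
Qed.

Lemma dF_head N F F' : (1 <= N)%nat -> is_fold N F -> is_fold N F' ->
  F 0%nat <> F' 0%nat -> 9 / (20 * INR N) <= dF N F F'.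
Proof.
  intros HN HF HF' E. unfold dF. fold (aF F F').
  assert (Hn : 1 <= INR N) by (apply (le_INR 1); auto).
  assert (Hx := aF_ex N F F' HF HF').
  rewrite (Series_incr_1 _ Hx).
  assert (0 <= Series (fun k => aF F F' (S k))).
  { apply series_ge0; [| intros; apply aF_ge0].
    apply (ex_series_incr_1 (aF F F')); auto. }
  assert (1 <= IZR (Z.abs (F 0%nat - F' 0%nat))) by (apply IZR_le; lia).
  unfold aF at 1. simpl pow.
  replace (9 / (20 * INR N)) with (9 / (2 * INR N) * (1 / (10 * 1))) by (field; lra).
  apply Rmult_le_compat_l. apply Rdiv_le_0_compat; lra.
  unfold Rdiv. lra.
Qed.

Theorem mainTheorem1 (N : nat) (HN : (1 <= N)%nat) :
  forall x : Pt, inX N x ->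
  forall eps : R, 0 < eps ->
  exists del : R, 0 < del /\
    forall y : Pt, inX N y -> d N x y < del -> d N (G x) (G y) < eps.
Proof.
  intros [C F] [HC HF] eps Heps.
  assert (Hn : 1 <= INR N) by (apply (le_INR 1); auto).
  exists (Rmin 1 (Rmin (9 / (20 * INR N)) (eps / 10))).
  split.
  { apply Rmin_pos; [lra| apply Rmin_pos; [apply Rdiv_lt_0_compat; lra| lra]]. }
  intros [C' F'] [HC' HF'] Hd. simpl in *.
  unfold d in Hd; simpl in Hd.
  pose proof (dC_ge0 N C C'). pose proof (dF_ge0 N F F' HF HF').
  pose proof (Rmin_l 1 (Rmin (9 / (20 * INR N)) (eps / 10))).
  pose proof (Rmin_r 1 (Rmin (9 / (20 * INR N)) (eps / 10))).
  pose proof (Rmin_l (9 / (20 * INR N)) (eps / 10)).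
  pose proof (Rmin_r (9 / (20 * INR N)) (eps / 10)).
  assert (EC : C = C').
  { apply (dC_small N); try (apply frakC_len; auto). lra. }
  assert (EF : F 0%nat = F' 0%nat).
  { destruct (Z.eq_dec (F 0%nat) (F' 0%nat)) as [e|e]; auto.
    pose proof (dF_head N F F' HN HF HF' e). lra. }
  subst C'. unfold d, G; simpl. rewrite EF, dC_refl.
  rewrite (dF_shift N F F' HF HF' EF). lra.
Qed.
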